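(* Let $P,K:\mathbb{N}_0\to\mathbb{N}_0$ be a scaling with $\lim_{n\to\infty}K_n^2/P_n=0$, and let $p:\mathbb{N}_0\to[0,1]$ satisfy $p_n\sim 1-q(\theta_n)$. Then $$\frac{\mathbb{E}[T_n(\theta_n)]}{\mathbb{E}[T_n(p_n)]}\sim 1+\frac{P_n}{K_n^3}.$$
   Context: Random key graph: for positive integers $K\le P$, $\theta=(K,P)$ and $n\ge3$, each of $n$ nodes receives independently a uniformly random $K$-element subset of $\{1,\dots,P\}$; distinct nodes are adjacent iff their subsets intersect; $T_n(\theta)$ is the number of triangles in this graph. $q(\theta)=\binom{P-K}{K}/\binom{P}{K}$ if $2K\le P$ and $0$ otherwise. $T_n(p)$ is the number of triangles in the Erdős–Rényi graph $\mathbb{G}(n;p)$ (each edge present independently with probability $p$), so $\mathbb{E}[T_n(p)]=\binom n3 p^3$. A scaling is a pair $P,K:\mathbb{N}_0\to\mathbb{N}_0$ with $1\le K_n\le P_n$, and $\theta_n=(K_n,P_n)$; $a_n\sim b_n$ means $a_n/b_n\to1$. *)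

(* Defs.v *)
From Stdlib Require Import Reals.
From mathcomp Require Import all_boot.

Set Implicit Arguments.
Unset Strict Implicit.
Unset Printing Implicit Defensive.

(* The key pool {1,...,P} is represented by 'I_P, the nodes by 'I_n.
   A key assignment gives each node a subset of the pool; the uniform
   random K-subset model is the uniform distribution on the assignments
   in which every ring has exactly K elements (independence across nodes
   is the product structure of this set of functions). *)
Definition keyrings (n K P : nat) : {set {ffun 'I_n -> {set 'I_P}}} :=
  [set f : {ffun 'I_n -> {set 'I_P}} | [forall i, #|f i| == K]].

Definition triangles (n P : nat) (f : {ffun 'I_n -> {set 'I_P}}) : nat :=
  #|[set T : {set 'I_n} | (#|T| == 3) &&
      [forall i in T, forall j in T, (i != j) ==> (f i :&: f j != set0)]]|.

Definition sum_triangles (n K P : nat) : nat :=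
  \sum_(f in keyrings n K P) triangles f.

Local Open Scope R_scope.

(* E[T_n(theta)] for theta = (K,P): average of the triangle count over
   the uniform distribution on key assignments. *)
Definition ET_key (n K P : nat) : R :=
  INR (sum_triangles n K P) / INR #|keyrings n K P|.

Definition ET_er (n : nat) (p : R) : R := INR 'C(n, 3) * p ^ 3.

Definition q (K P : nat) : R :=
  if (2 * K <= P)%N then INR 'C(P - K, K) / INR 'C(P, K) else 0.

(* Main.v *)
Require Import Defs.
From Stdlib Require Import Reals Lra Psatz.
From mathcomp Require Import all_boot.
From mathcomp Require Import zify.
Set Implicit Arguments.
Unset Strict Implicit.
Unset Printing Implicit Defensive.

Section G.
Variables (P K : nat).
Local Notation X := {set 'I_P}.

Definition SK (A : X) := #|A| == K.
Definition g (U : X) := \sum_(A | SK A) (U \subset A : nat).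

Lemma g_card U : g U = #|[set A : X | SK A && (U \subset A)]|.
Proof. by rewrite /g -big_mkcondr /= sum1dep_card. Qed.

Lemma card_sup (U : X) : #|U| <= K -> g U = 'C(P - #|U|, K - #|U|).
Proof.
move=> hU; rewrite g_card.
have -> : [set A : X | SK A && (U \subset A)] =
   (fun B => B :|: U) @: [set B : X | B \subset ~: U & #|B| == K - #|U|].
  apply/setP=> A; rewrite inE /SK; apply/andP/imsetP.
    move=> [/eqP hA hUA]; exists (A :\: U); last by apply/setP=> x; rewrite !inE; case: (boolP (x \in U)) => xU /=; [by rewrite (subsetP hUA) | by rewrite orbF].
    rewrite inE; apply/andP; split; first by apply/subsetP=> x; rewrite !inE => /andP[].
    have := cardsD A U; rewrite (setIidPr hUA) hA => ->; by [].
  move=> [B]; rewrite inE => /andP[hB /eqP hcB] ->; split; last exact: subsetUr.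
  rewrite cardsU hcB. have -> : B :&: U = set0.
    apply/setP=> x; rewrite !inE; apply/negbTE; apply/negP => /andP[xB xU].
    by move/subsetP: hB => /(_ x xB); rewrite inE xU.
  rewrite cards0 subn0 subnK //.
rewrite card_in_imset ?cards_draws.
  by rewrite cardsCs setCK card_ord.
move=> B1 B2; rewrite !inE => /andP[h1 _] /andP[h2 _] e.
have dj (B : X) : B \subset ~: U -> (B :|: U) :\: U = B.
  move=> hB; apply/setP=> x; rewrite !inE; case xU: (x \in U) => /=.
    by apply/esym/negP=> xB; move/subsetP: hB => /(_ x xB); rewrite inE xU.
  by rewrite orbF.
by rewrite -(dj _ h1) e dj.
Qed.

Lemma bin_ratio s : s <= K -> K <= P -> 'C(P - s, K - s) * P ^_ s = 'C(P, K) * K ^_ s.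
Proof.
move=> hs hK.
have f1 := bin_fact hK.
have f2 : 'C(P - s, K - s) * ((K - s)`! * ((P - s) - (K - s))`!) = (P - s)`!.
  by apply: bin_fact; lia.
have e : (P - s) - (K - s) = P - K by lia.
rewrite e in f2.
have f3 := ffact_fact hs. have f4 : P ^_ s * (P - s)`! = P`! by apply: ffact_fact; lia.
apply/eqP; rewrite -(eqn_pmul2r (fact_gt0 (K - s))) -(eqn_pmul2r (fact_gt0 (P - K))).
apply/eqP; transitivity P`!.
  rewrite -f4 -f2; nia.
rewrite -f1 -f3; nia.
Qed.

Definition gs s := if s <= K then 'C(P - s, K - s) else 0.

Lemma g_gs U : g U = gs #|U|.
Proof.
rewrite /gs; case: ifP => h; first exact: card_sup.
rewrite g_card; apply/eqP; rewrite cards_eq0; apply/eqP/setP=> A; rewrite !inE /SK.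
apply/negP=> /andP[/eqP hA hUA]; have := subset_leq_card hUA; rewrite hA h.
by [].
Qed.

Lemma gs_ratio s : K <= P -> gs s * P ^_ s = 'C(P, K) * K ^_ s.
Proof.
move=> hK; rewrite /gs; case: ifP => h; first exact: bin_ratio.
rewrite [K ^_ s]ffact_small ?muln0 //; lia.
Qed.

End G.

Lemma sumb (T : finType) (p : pred T) : \sum_(z : T) (p z : nat) = #|[set z | p z]|.
Proof. by rewrite -sum1dep_card [RHS]big_mkcond /=; apply: eq_bigr => z _; case: (p z). Qed.

Lemma sub2 (T : finType) (x y : T) (A : {set T}) :
  ([set x; y] \subset A) = (x \in A) && (y \in A).
Proof. by rewrite subUset !sub1set. Qed.

Lemma sub3 (T : finType) (x y z : T) (A : {set T}) :
  ([set x; y; z] \subset A) = [&& x \in A, y \in A & z \in A].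
Proof. by rewrite !subUset !sub1set andbA. Qed.

Lemma pairs_card (T : finType) (E : {set T}) :
  \sum_(x : T) \sum_(y : T) ((x != y) && ([set x; y] \subset E) : nat)
  = #|E| * (#|E| - 1).
Proof.
transitivity (\sum_(x : T) ((x \in E) : nat) * (#|E| - 1)).
  apply: eq_bigr => x _; case xE: (x \in E); last first.
    by rewrite mul0n big1 // => y _; rewrite sub2 xE andbF.
  rewrite mul1n sumb (cardsD1 x E) xE add1n subSS subn0; apply: eq_card => y; rewrite !inE.
  idtac.
  by rewrite sub2 xE eq_sym.
by rewrite -big_distrl /= sumb; congr (_ * _); apply: eq_card => x; rewrite inE.
Qed.

Lemma bonf_nat m : m <= (0 < m) + m * (m - 1).
Proof. case: m => //= m; nia. Qed.

Lemma bonf (T : finType) (E : {set T}) :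
  #|E| <= (E != set0) + \sum_(x : T) \sum_(y : T) ((x != y) && ([set x; y] \subset E) : nat).
Proof. by rewrite pairs_card -card_gt0; apply: bonf_nat. Qed.

Section S3.
Variables (P K : nat).
Local Notation X := {set 'I_P}.
Local Notation SK := (@SK P K).

Lemma sum3 (f h k : X -> nat) :
  \sum_(A | SK A) \sum_(B | SK B) \sum_(C | SK C) (f A * h B * k C)
  = (\sum_(A | SK A) f A) * (\sum_(B | SK B) h B) * (\sum_(C | SK C) k C).
Proof.
under eq_bigr do under eq_bigr do rewrite -big_distrr /=.
under eq_bigr do rewrite -big_distrl /=.
rewrite -big_distrl /=. congr (_ * _).
under eq_bigr do rewrite -big_distrr /=.
by rewrite -big_distrl.
Qed.

Lemma swap3 (I : finType) (F : I -> X -> X -> X -> nat) :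
  \sum_(A | SK A) \sum_(B | SK B) \sum_(C | SK C) \sum_(i : I) F i A B C
  = \sum_(i : I) \sum_(A | SK A) \sum_(B | SK B) \sum_(C | SK C) F i A B C.
Proof.
under eq_bigr do under eq_bigr do rewrite exchange_big /=.
under eq_bigr do rewrite exchange_big /=.
by rewrite exchange_big.
Qed.

End S3.

Lemma le_sum1 (I : finType) (F : I -> nat) i : F i <= \sum_(j : I) F j.
Proof. by rewrite (bigD1 i) //= leq_addr. Qed.

Lemma sum3T (T : finType) (f h k : T -> nat) :
  \sum_(x : T) \sum_(y : T) \sum_(z : T) (f x * h y * k z)
  = (\sum_(x : T) f x) * (\sum_(y : T) h y) * (\sum_(z : T) k z).
Proof.
under eq_bigr do under eq_bigr do rewrite -big_distrr /=.
under eq_bigr do rewrite -big_distrl /=.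
rewrite -big_distrl /=. congr (_ * _).
under eq_bigr do rewrite -big_distrr /=.
by rewrite -big_distrl.
Qed.

Lemma L1 e a b c d f g : 1 <= a -> 1 <= e + (a + b + c + d + f + g). Proof. lia. Qed.
Lemma L2 e a b c d f g : 1 <= b -> 1 <= e + (a + b + c + d + f + g). Proof. lia. Qed.
Lemma L3 e a b c d f g : 1 <= c -> 1 <= e + (a + b + c + d + f + g). Proof. lia. Qed.
Lemma L4 e a b c d f g : 1 <= d -> 1 <= e + (a + b + c + d + f + g). Proof. lia. Qed.
Lemma L5 e a b c d f g : 1 <= f -> 1 <= e + (a + b + c + d + f + g). Proof. lia. Qed.
Lemma L6 e a b c d f g : 1 <= g -> 1 <= e + (a + b + c + d + f + g). Proof. lia. Qed.
Lemma Lcomb a p s e q : a + s <= q -> a + p + (s + e) <= q + p + e. Proof. lia. Qed.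
Lemma L0 e a : 1 <= e -> 1 <= e + a. Proof. lia. Qed.

Section PW.
Variable P : nat.
Local Notation X := {set 'I_P}.
Implicit Types (A B C : X) (x y z w : 'I_P).

Definition pm A B C := [&& A :&: B != set0, B :&: C != set0 & C :&: A != set0].
Definition dist x y z := [&& x != y, y != z & x != z].
Definition cfg x y z A B C :=
  ([set x; z] \subset A : nat) * ([set x; y] \subset B : nat) * ([set y; z] \subset C : nat).
Definition m1 A B C :=
  \sum_x (([set x] \subset A : nat) * ([set x] \subset B : nat) * ([set x] \subset C : nat)).
Definition m2 A B C := \sum_x \sum_y \sum_z (dist x y z * cfg x y z A B C).

Lemma pm_up A B C : pm A B C <= m1 A B C + m2 A B C.
Proof.
rewrite /pm; case: (boolP [&& _, _ & _]) => [|_]; last by [].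
move=> /and3P[/set0Pn[x] /setIP[xA xB] /set0Pn[y] /setIP[yB yC] /set0Pn[z] /setIP[zC zA]].
have H1 v : v \in A -> v \in B -> v \in C -> 1 <= m1 A B C.
  move=> vA vB vC; apply: leq_trans (le_sum1 _ v); by rewrite !sub1set vA vB vC.
case: (eqVneq x y) => [exy|nxy]; first by subst y; apply: leq_trans (H1 x xA xB yC) (leq_addr _ _).
case: (eqVneq y z) => [eyz|nyz]; first by subst z; apply: leq_trans (H1 y zA yB yC) (leq_addr _ _).
case: (eqVneq x z) => [exz|nxz]; first by subst z; apply: leq_trans (H1 x xA xB zC) (leq_addr _ _).
apply: leq_trans (leq_addl _ _).
apply: leq_trans (le_sum1 _ x); apply: leq_trans (le_sum1 _ y); apply: leq_trans (le_sum1 _ z).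
by rewrite /dist /cfg nxy nyz nxz !sub2 xA zA xB yB yC zC.
Qed.

Definition pairs A B C := \sum_x \sum_y ((x != y) : nat) *
  (([set x; y] \subset A : nat) * ([set x; y] \subset B : nat) * ([set x; y] \subset C : nat)).
Definition exact x y z A B C := dist x y z * ((A :&: B == [set x]) : nat) *
  ((B :&: C == [set y]) : nat) * ((C :&: A == [set z]) : nat).
Definition d4 x y z w := dist x y z && (w \notin [set x; y; z]).
Definition err x y z A B C :=
  \sum_w (d4 x y z w * (([set x; z; w] \subset A : nat) * ([set x; y; w] \subset B : nat) * ([set y; z] \subset C : nat)))
+ \sum_w (d4 x y z w * (([set x; z] \subset A : nat) * ([set x; y; w] \subset B : nat) * ([set y; z; w] \subset C : nat)))
+ \sum_w (d4 x y z w * (([set x; z; w] \subset A : nat) * ([set x; y] \subset B : nat) * ([set y; z; w] \subset C : nat)))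
+ dist x y z * (([set x; z; y] \subset A : nat) * ([set x; y] \subset B : nat) * ([set y; z] \subset C : nat))
+ dist x y z * (([set x; z] \subset A : nat) * ([set x; y; z] \subset B : nat) * ([set y; z] \subset C : nat))
+ dist x y z * (([set x; z] \subset A : nat) * ([set x; y] \subset B : nat) * ([set y; z; x] \subset C : nat)).

Lemma m1_card A B C : m1 A B C = #|A :&: B :&: C|.
Proof.
rewrite /m1 -sumb; apply: eq_bigr => x _; rewrite !sub1set !inE.
by case: (x \in A); case: (x \in B); case: (x \in C).
Qed.

Lemma pairs_eq A B C : pairs A B C =
  \sum_x \sum_y ((x != y) && ([set x; y] \subset A :&: B :&: C) : nat).
Proof.
apply: eq_bigr => x _; apply: eq_bigr => y _; rewrite !sub2 !inE.
by case: (x != y); case: (x \in A); case: (x \in B); case: (x \in C);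
   case: (y \in A); case: (y \in B); case: (y \in C).
Qed.

Lemma m1_le A B C : m1 A B C <= (A :&: B :&: C != set0) + pairs A B C.
Proof. by rewrite m1_card pairs_eq; apply: bonf. Qed.

Lemma sum_neq0 (I : finType) (F : I -> nat) : \sum_(i : I) F i != 0 -> exists i, F i != 0.
Proof.
move=> h; case: (pickP (fun i => F i != 0)) => [i hi|none]; first by exists i.
by move: h; rewrite big1 // => i _; move: (none i) => /negbFE/eqP.
Qed.

Lemma single_le1 (E : X) : \sum_x ((E == [set x]) : nat) <= 1.
Proof.
case: (pickP (fun x => E == [set x])) => [x0 /eqP hx0|none]; last by rewrite big1 // => x _; rewrite none.
rewrite hx0 (eq_bigr (fun x => (x0 == x) : nat)); last first.
  by move=> x _; congr nat_of_bool; apply/eqP/eqP => [/set1_inj|->].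
rewrite sumb (_ : [set x | x0 == x] = [set x0]) ?cards1 //.
by apply/setP=> x; rewrite !inE eq_sym.
Qed.

Lemma exact_pm A B C :
  (A :&: B :&: C != set0) + \sum_x \sum_y \sum_z exact x y z A B C <= pm A B C.
Proof.
case: (eqVneq (\sum_x \sum_y \sum_z exact x y z A B C) 0) => [->|ne].
  rewrite addn0 /pm; case: (boolP (A :&: B :&: C != set0)) => // /set0Pn[v].
  rewrite !inE => /andP[/andP[vA vB] vC].
  have h1 : A :&: B != set0 by apply/set0Pn; exists v; rewrite inE vA vB.
  have h2 : B :&: C != set0 by apply/set0Pn; exists v; rewrite inE vC vB.
  have h3 : C :&: A != set0 by apply/set0Pn; exists v; rewrite inE vA vC.
  by rewrite h1 h2 h3.
have [x /sum_neq0 [y /sum_neq0 [z hz]]] := sum_neq0 ne.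
move: hz; rewrite /exact.
case: (boolP (dist x y z)) => // /and3P[nxy nyz nxz].
case: (boolP (A :&: B == [set x])) => // /eqP e1.
case: (boolP (B :&: C == [set y])) => // /eqP e2.
case: (boolP (C :&: A == [set z])) => // /eqP e3 _.
have D0 : A :&: B :&: C = set0.
  apply/setP=> v; rewrite in_set0; apply/negbTE/negP.
  rewrite !inE => /andP[/andP[vA vB] vC].
  have : v \in A :&: B by rewrite inE vA vB.
  have : v \in C :&: A by rewrite inE vA vC.
  rewrite e1 e3 !inE => /eqP -> /eqP hx; by rewrite hx eqxx in nxz.
have pmT : pm A B C.
  by rewrite /pm e1 e2 e3 -!card_gt0 !cards1.
rewrite D0 eqxx pmT add0n.
apply: leq_trans (_ : \sum_x \sum_y \sum_z (((A :&: B == [set x]) : nat) *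
   ((B :&: C == [set y]) : nat) * ((C :&: A == [set z]) : nat)) <= 1).
  apply: leq_sum => x' _; apply: leq_sum => y' _; apply: leq_sum => z' _.
  by case: (dist x' y' z'); rewrite ?mul0n ?mul1n // -!mulnA.
rewrite sum3T.
exact: (leq_mul (leq_mul (single_le1 (A :&: B)) (single_le1 (B :&: C))) (single_le1 (C :&: A))).
Qed.


Lemma not_single (E : X) x : x \in E -> E != [set x] -> exists2 w, w \in E & w != x.
Proof.
move=> xE ne; case: (pickP (fun w => (w \in E) && (w != x))) => [w /andP[h1 h2]|none].
  by exists w.
move: ne; have -> : E = [set x]; last by rewrite eqxx.
apply/setP=> w; rewrite inE; case: (eqVneq w x) => [->|nwx]; first by rewrite xE.
by move: (none w); rewrite nwx andbT => ->.
Qed.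

Lemma core x y z A B C : dist x y z -> x \in A -> z \in A -> x \in B -> y \in B ->
  y \in C -> z \in C -> 1 <= exact x y z A B C + err x y z A B C.
Proof.
move=> hd xA zA xB yB yC zC; move: (hd) => /and3P[nxy nyz nxz].
have t4 : y \in A -> 1 <= dist x y z * (([set x; z; y] \subset A : nat) * ([set x; y] \subset B : nat) * ([set y; z] \subset C : nat)).
  by move=> yA; rewrite hd !sub3 !sub2 xA zA yA xB yB yC zC.
have t5 : z \in B -> 1 <= dist x y z * (([set x; z] \subset A : nat) * ([set x; y; z] \subset B : nat) * ([set y; z] \subset C : nat)).
  by move=> zB; rewrite hd !sub3 !sub2 xA zA zB xB yB yC zC.
have t6 : x \in C -> 1 <= dist x y z * (([set x; z] \subset A : nat) * ([set x; y] \subset B : nat) * ([set y; z; x] \subset C : nat)).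
  by move=> xC; rewrite hd !sub3 !sub2 xA zA xC xB yB yC zC.
have d4w w : w != x -> w != y -> w != z -> d4 x y z w.
  by move=> a b c; rewrite /d4 hd !inE (negbTE a) (negbTE b) (negbTE c).
have t1 w : w != x -> w != y -> w != z -> w \in A -> w \in B -> 1 <= \sum_w (d4 x y z w * (([set x; z; w] \subset A : nat) * ([set x; y; w] \subset B : nat) * ([set y; z] \subset C : nat))).
  move=> a b c wA wB; apply: leq_trans (le_sum1 _ w).
  by rewrite d4w // !sub3 !sub2 xA zA wA xB yB wB yC zC.
have t2 w : w != x -> w != y -> w != z -> w \in B -> w \in C -> 1 <= \sum_w (d4 x y z w * (([set x; z] \subset A : nat) * ([set x; y; w] \subset B : nat) * ([set y; z; w] \subset C : nat))).
  move=> a b c wB wC; apply: leq_trans (le_sum1 _ w).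
  by rewrite d4w // !sub3 !sub2 xA zA wC xB yB wB yC zC.
have t3 w : w != x -> w != y -> w != z -> w \in C -> w \in A -> 1 <= \sum_w (d4 x y z w * (([set x; z; w] \subset A : nat) * ([set x; y] \subset B : nat) * ([set y; z; w] \subset C : nat))).
  move=> a b c wC wA; apply: leq_trans (le_sum1 _ w).
  by rewrite d4w // !sub3 !sub2 xA zA wC wA xB yB yC zC.
have xAB : x \in A :&: B by rewrite inE xA xB.
have yBC : y \in B :&: C by rewrite inE yB yC.
have zCA : z \in C :&: A by rewrite inE zC zA.
rewrite /err.
case: (eqVneq (A :&: B) [set x]) => [e1|n1]; last first.
  have [w /setIP[wA wB] nwx] := not_single xAB n1.
  case: (eqVneq w y) => [ewy|nwy]; first by subst w; exact: L4 (t4 wA).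
  case: (eqVneq w z) => [ewz|nwz]; first by subst w; exact: L5 (t5 wB).
  exact: L1 (t1 w nwx nwy nwz wA wB).
case: (eqVneq (B :&: C) [set y]) => [e2|n2]; last first.
  have [w /setIP[wB wC] nwy] := not_single yBC n2.
  case: (eqVneq w x) => [ewx|nwx]; first by subst w; exact: L6 (t6 wC).
  case: (eqVneq w z) => [ewz|nwz]; first by subst w; exact: L5 (t5 wB).
  exact: L2 (t2 w nwx nwy nwz wB wC).
case: (eqVneq (C :&: A) [set z]) => [e3|n3]; last first.
  have [w /setIP[wC wA] nwz] := not_single zCA n3.
  case: (eqVneq w x) => [ewx|nwx]; first by subst w; exact: L6 (t6 wC).
  case: (eqVneq w y) => [ewy|nwy]; first by subst w; exact: L4 (t4 wA).
  exact: L3 (t3 w nwx nwy nwz wC wA).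
apply: L0; by rewrite /exact hd e1 e2 e3 !eqxx.
Qed.

Lemma cfg_exact x y z A B C :
  dist x y z * cfg x y z A B C <= exact x y z A B C + err x y z A B C.
Proof.
rewrite /cfg !sub2.
case: (boolP (dist x y z)) => hd; last by [].
case: (boolP (x \in A)) => xA //; case: (boolP (z \in A)) => zA //;
case: (boolP (x \in B)) => xB //; case: (boolP (y \in B)) => yB //;
case: (boolP (y \in C)) => yC //; case: (boolP (z \in C)) => zC //.
exact: core.
Qed.

Definition errs A B C := \sum_x \sum_y \sum_z err x y z A B C.

Lemma pm_low A B C : m1 A B C + m2 A B C <= pm A B C + pairs A B C + errs A B C.
Proof.
have h1 := m1_le A B C.
have h2 : m2 A B C <= \sum_x \sum_y \sum_z exact x y z A B C + errs A B C.
  rewrite /m2 /errs -!big_split /=; apply: leq_sum => x _.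
  rewrite -!big_split /=; apply: leq_sum => y _.
  rewrite -!big_split /=; apply: leq_sum => z _; exact: cfg_exact.
apply: leq_trans (leq_add h1 h2) _.
exact: Lcomb (exact_pm A B C).
Qed.

End PW.

Lemma cards3 (T : finType) (a b c : T) : a != b -> b != c -> a != c -> #|[set a; b; c]| = 3.
Proof.
move=> ab bc ac; rewrite setUC cardsU1 cards2 ab !inE negb_or eq_sym ac eq_sym bc.
by [].
Qed.

Lemma sum_const_ord P c : \sum_(x : 'I_P) c = P * c.
Proof. by rewrite sum_nat_const card_ord. Qed.

Lemma count_dist P : \sum_(x : 'I_P) \sum_(y : 'I_P) \sum_(z : 'I_P) (dist x y z : nat)
  = P * ((P - 1) * (P - 2)).
Proof.
transitivity (\sum_(x : 'I_P) \sum_(y : 'I_P) ((x != y) : nat) * (P - 2)).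
  apply: eq_bigr => x _; apply: eq_bigr => y _.
  case: (eqVneq x y) => [<-|nxy]; first by rewrite mul0n big1 // => z _; rewrite /dist eqxx.
  rewrite mul1n sumb.
  have -> : [set z | dist x y z] = ~: [set x; y].
    by apply/setP=> z; rewrite !inE /dist nxy /= (eq_sym y z) (eq_sym x z); case: (z == x); case: (z == y).
  by rewrite cardsCs setCK card_ord cards2 nxy.
rewrite -sum_const_ord; apply: eq_bigr => x _.
rewrite -big_distrl /= sumb.
rewrite (_ : #|[set y | x != y]| = P - 1) //.
have := cardsD1 x [set: 'I_P]; rewrite cardsT card_ord inE.
have -> : [set: 'I_P] :\ x = [set y | x != y] by apply/setP=> y; rewrite !inE andbT eq_sym.
lia.
Qed.

Ltac sym_all := repeat match goal with H : is_true (?u != ?v) |- _ =>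
  lazymatch goal with _ : is_true (v != u) |- _ => fail | _ => have := H; rewrite eq_sym => ? end end.
Ltac solve_c := sym_all; rewrite ?cards3 // ?cards2;
  repeat match goal with H : is_true (?u != ?v) |- context[?u != ?v] => rewrite H end; by [].

Section Sums.
Variables P K : nat.
Local Notation X := {set 'I_P}.
Local Notation SK := (@SK P K).
Local Notation G s := (gs P K s).

Lemma gsum (U : X) : \sum_(A | SK A) ((U \subset A) : nat) = G #|U|.
Proof. exact: g_gs. Qed.

Lemma sum3c c (f h k : X -> nat) :
  \sum_(A | SK A) \sum_(B | SK B) \sum_(C | SK C) (c * (f A * h B * k C))
  = c * ((\sum_(A | SK A) f A) * (\sum_(B | SK B) h B) * (\sum_(C | SK C) k C)).
Proof.
rewrite -sum3 big_distrr /=; apply: eq_bigr => A _.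
rewrite big_distrr /=; apply: eq_bigr => B _.
by rewrite big_distrr.
Qed.

Lemma sum3_split (F H : X -> X -> X -> nat) :
  \sum_(A | SK A) \sum_(B | SK B) \sum_(C | SK C) (F A B C + H A B C)
  = \sum_(A | SK A) \sum_(B | SK B) \sum_(C | SK C) F A B C
  + \sum_(A | SK A) \sum_(B | SK B) \sum_(C | SK C) H A B C.
Proof.
rewrite -big_split /=; apply: eq_bigr => A _.
rewrite -big_split /=; apply: eq_bigr => B _.
by rewrite -big_split.
Qed.

Lemma sum3_le (F H : X -> X -> X -> nat) : (forall A B C, F A B C <= H A B C) ->
  \sum_(A | SK A) \sum_(B | SK B) \sum_(C | SK C) F A B C
  <= \sum_(A | SK A) \sum_(B | SK B) \sum_(C | SK C) H A B C.
Proof.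
move=> h; apply: leq_sum => A _; apply: leq_sum => B _; apply: leq_sum => C _; exact: h.
Qed.

Lemma bnd_1 (b : bool) (U V W : X) c :
  (b -> G #|U| * G #|V| * G #|W| = c) ->
  \sum_(A | SK A) \sum_(B | SK B) \sum_(C | SK C)
     (b * (((U \subset A) : nat) * ((V \subset B) : nat) * ((W \subset C) : nat))) <= c.
Proof.
move=> h; rewrite sum3c !gsum; case: b h => [h|_] /=; first by rewrite mul1n h.
by rewrite mul0n.
Qed.

Lemma bnd_w (d : 'I_P -> bool) (U V W : 'I_P -> X) c :
  (forall w, d w -> G #|U w| * G #|V w| * G #|W w| = c) ->
  \sum_(A | SK A) \sum_(B | SK B) \sum_(C | SK C) \sum_(w : 'I_P)
     (d w * (((U w \subset A) : nat) * ((V w \subset B) : nat) * ((W w \subset C) : nat))) <= P * c.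
Proof.
move=> h; rewrite swap3 -sum_const_ord; apply: leq_sum => w _; apply: bnd_1; exact: h.
Qed.

Definition ttri := \sum_(A | SK A) \sum_(B | SK B) \sum_(C | SK C) (pm A B C : nat).

Lemma sum_m1 : \sum_(A | SK A) \sum_(B | SK B) \sum_(C | SK C) m1 A B C = P * G 1 ^ 3.
Proof.
rewrite /m1 swap3 -sum_const_ord; apply: eq_bigr => x _.
by rewrite sum3 !gsum cards1 !expnS expn0 muln1 mulnA.
Qed.

Lemma swap3_3 (F : 'I_P -> 'I_P -> 'I_P -> X -> X -> X -> nat) :
  \sum_(A | SK A) \sum_(B | SK B) \sum_(C | SK C) \sum_x \sum_y \sum_z F x y z A B C
  = \sum_x \sum_y \sum_z \sum_(A | SK A) \sum_(B | SK B) \sum_(C | SK C) F x y z A B C.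
Proof.
rewrite swap3; apply: eq_bigr => x _; rewrite swap3; apply: eq_bigr => y _; by rewrite swap3.
Qed.

Lemma sum_m2 : \sum_(A | SK A) \sum_(B | SK B) \sum_(C | SK C) m2 A B C
   = P * ((P - 1) * (P - 2)) * G 2 ^ 3.
Proof.
rewrite /m2 swap3_3 -count_dist big_distrl /=; apply: eq_bigr => x _.
rewrite big_distrl /=; apply: eq_bigr => y _.
rewrite big_distrl /=; apply: eq_bigr => z _.
rewrite /cfg sum3c !gsum; case: (boolP (dist x y z)) => [/and3P[a b c]|]; last by rewrite !mul0n.
by rewrite !cards2 a b c /= !mul1n !expnS expn0 muln1 mulnA.
Qed.

Lemma sum_pairs : \sum_(A | SK A) \sum_(B | SK B) \sum_(C | SK C) pairs A B C
   <= P * (P * G 2 ^ 3).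
Proof.
rewrite /pairs swap3 -sum_const_ord; apply: leq_sum => x _.
rewrite swap3 -sum_const_ord; apply: leq_sum => y _.
apply: bnd_1 => nxy; by rewrite !cards2 nxy !expnS expn0 muln1 mulnA.
Qed.

Lemma sum_errs : \sum_(A | SK A) \sum_(B | SK B) \sum_(C | SK C) errs A B C
   <= P * (P * (P * (P * (G 3 * G 3 * G 2) + P * (G 2 * G 3 * G 3) + P * (G 3 * G 2 * G 3)
        + G 3 * G 2 * G 2 + G 2 * G 3 * G 2 + G 2 * G 2 * G 3))).
Proof.
rewrite /errs swap3_3 -sum_const_ord; apply: leq_sum => x _.
rewrite -sum_const_ord; apply: leq_sum => y _.
rewrite -sum_const_ord; apply: leq_sum => z _.
rewrite /err !sum3_split.
have Hd w : d4 x y z w -> [/\ [/\ x != y, y != z & x != z], w != x, w != y & w != z].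
  rewrite /d4 /dist => /andP[/and3P[a b c]]; rewrite !inE !negb_or => /andP[/andP[d e] f].
  by [].
repeat apply: leq_add.
- apply: bnd_w => w hw; have [[a b c] d e f] := Hd w hw; solve_c.
- apply: bnd_w => w hw; have [[a b c] d e f] := Hd w hw; solve_c.
- apply: bnd_w => w hw; have [[a b c] d e f] := Hd w hw; solve_c.
- apply: bnd_1 => /and3P[a b c]; solve_c.
- apply: bnd_1 => /and3P[a b c]; solve_c.
- apply: bnd_1 => /and3P[a b c]; solve_c.
Qed.

End Sums.

Lemma set_in (T : finType) (A : {set T}) : [set y | y \in A] = A.
Proof. by apply/setP=> y; rewrite inE. Qed.

Section Fin.
Variables P K : nat.
Local Notation X := {set 'I_P}.
Local Notation SK := (@SK P K).
Local Notation G s := (gs P K s).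

Lemma t_up : ttri P K <= P * G 1 ^ 3 + P * ((P - 1) * (P - 2)) * G 2 ^ 3.
Proof.
rewrite -sum_m1 -sum_m2 -sum3_split; apply: sum3_le; exact: pm_up.
Qed.

Lemma t_low : P * G 1 ^ 3 + P * ((P - 1) * (P - 2)) * G 2 ^ 3 <= ttri P K + P * (P * G 2 ^ 3) +
   P * (P * (P * (P * (G 3 * G 3 * G 2) + P * (G 2 * G 3 * G 3) + P * (G 3 * G 2 * G 3)
        + G 3 * G 2 * G 2 + G 2 * G 3 * G 2 + G 2 * G 2 * G 3))).
Proof.
rewrite -sum_m1 -sum_m2 -sum3_split; apply: leq_trans (@sum3_le P K (fun A B C => m1 A B C + m2 A B C)
  (fun A B C => pm A B C + pairs A B C + errs A B C) (@pm_low P)) _.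
rewrite !sum3_split; apply: leq_add; last exact: sum_errs.
by apply: leq_add => //; exact: sum_pairs.
Qed.

Lemma NK : K <= P -> #|[set A : X | SK A]| = 'C(P, K).
Proof. by move=> _; rewrite card_draws card_ord. Qed.

Lemma q_parts (A0 : X) : K <= P -> #|A0| = K ->
  'C(P - K, K) + \sum_(B | SK B) ((B :&: A0 != set0) : nat) = 'C(P, K).
Proof.
move=> hKP hA0.
have e1 : 'C(P - K, K) = \sum_(B | SK B) ((B \subset ~: A0) : nat).
  rewrite /g -big_mkcondr /= sum1dep_card -hA0.
  have -> : P - #|A0| = #|~: A0| by rewrite [#|~: A0|]cardsCs setCK card_ord.
  rewrite -cards_draws; apply: eq_card => B; rewrite !inE /SK hA0 andbC.
  by [].
rewrite e1 -big_split /= -NK // -sum1dep_card.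
apply: eq_bigr => B _; rewrite -disjoints_subset -setI_eq0.
by case: (B :&: A0 == set0).
Qed.

Lemma q_up (A0 : X) : #|A0| = K -> \sum_(B | SK B) ((B :&: A0 != set0) : nat) <= K * G 1.
Proof.
move=> hA0.
apply: leq_trans (_ : \sum_(B | SK B) \sum_x ((x \in A0) * ([set x] \subset B)) <= _).
  apply: leq_sum => B _; case: (boolP (B :&: A0 != set0)) => // /set0Pn[x /setIP[xB xA]].
  by apply: leq_trans (le_sum1 _ x); rewrite xA sub1set xB.
rewrite exchange_big /=.
apply: leq_trans (_ : \sum_x ((x \in A0) * G 1) <= _).
  apply: leq_sum => x _; rewrite -big_distrr /= gsum cards1 leqnn //.
by rewrite -big_distrl /= sumb set_in hA0.
Qed.

Lemma q_low (A0 : X) : #|A0| = K -> K * G 1 <= \sum_(B | SK B) ((B :&: A0 != set0) : nat) + K * K * G 2.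
Proof.
move=> hA0.
have h1 : K * G 1 = \sum_(B | SK B) \sum_x ((x \in A0) * ([set x] \subset B)).
  symmetry; rewrite exchange_big /=.
  under eq_bigr do rewrite -big_distrr /= gsum cards1.
  rewrite -big_distrl /= sumb; congr (_ * _); rewrite -hA0; apply: eq_card => x; rewrite inE.
  by [].
have h2 : \sum_(B | SK B) \sum_x \sum_y (((x != y) && (x \in A0) && (y \in A0)) * ([set x; y] \subset B)) <= K * K * G 2.
  rewrite exchange_big /=.
  apply: leq_trans (_ : \sum_x \sum_y (((x \in A0) && (y \in A0)) * G 2) <= _).
    apply: leq_sum => x _; rewrite exchange_big /=; apply: leq_sum => y _.
    rewrite -big_distrr /= gsum; case: (boolP (x != y)) => [nxy|_]; last by [].
    by rewrite cards2 nxy.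
  have e : forall x, \sum_y (((x \in A0) && (y \in A0)) * G 2) = (x \in A0) * (K * G 2).
    move=> x; case: (x \in A0) => /=; last by rewrite big1.
    by rewrite -big_distrl /= sumb set_in hA0 mul1n.
  under eq_bigr do rewrite e.
  by rewrite -big_distrl /= sumb set_in hA0 mulnA.
rewrite h1; apply: leq_trans (leq_add (leqnn _) h2); rewrite -big_split /=; apply: leq_sum => B _.
have hb := bonf (B :&: A0).
have c1 : #|B :&: A0| = \sum_x ((x \in A0) * ([set x] \subset B)).
  rewrite -{1}(set_in (B :&: A0)) -sumb; apply: eq_bigr => x _; rewrite sub1set !inE.
  by case: (x \in A0); case: (x \in B).
have c2 : \sum_x \sum_y ((x != y) && ([set x; y] \subset B :&: A0) : nat) =
   \sum_x \sum_y (((x != y) && (x \in A0) && (y \in A0)) * ([set x; y] \subset B)).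
  apply: eq_bigr => x _; apply: eq_bigr => y _; rewrite !sub2 !inE.
  by case: (x != y); case: (x \in A0); case: (x \in B); case: (y \in A0); case: (y \in B).
by rewrite -c1 -c2.
Qed.

End Fin.

Lemma card_fam n (Y : finType) (F : 'I_n -> pred Y) :
  #|[set f : {ffun 'I_n -> Y} | [forall x, f x \in F x]]| = \prod_(x : 'I_n) #|F x|.
Proof.
rewrite (eq_card (B := family F)); last first.
  move=> f; rewrite inE; apply/forallP/familyP => h x; exact: h.
rewrite card_family foldrE big_map big_enum /=.
by apply: eq_bigl => x.
Qed.

Section Fam.
Variables (n P K : nat).
Local Notation X := {set 'I_P}.
Local Notation SK := (@SK P K).

Lemma card_pred1_SK (a : X) : #|[pred s : X | (s == a) && SK s]| = SK a.
Proof.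
case: (boolP (SK a)) => h.
  rewrite (eq_card (B := pred1 a)) ?card1 // => s /=; rewrite !inE /=.
  by case: (eqVneq s a) => [->|]; rewrite ?h.
by apply: eq_card0 => s; rewrite !inE /=; case: (eqVneq s a) => [->|] //=; rewrite (negbTE h).
Qed.

Lemma card_SK : #|[pred s : X | SK s]| = 'C(P, K).
Proof.
have := card_draws 'I_P K; rewrite card_ord => <-; apply: eq_card => s; by rewrite !inE.
Qed.

Lemma card_rest (i j k : 'I_n) : i != j -> j != k -> i != k ->
  #|[pred x : 'I_n | (x != i) && (x != j) && (x != k)]| = n - 3.
Proof.
move=> ij jk ik.
have : #|[pred x : 'I_n | (x != i) && (x != j) && (x != k)]| = #|~: [set i; j; k]|.
  by apply: eq_card => x; rewrite !inE /= !negb_or.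
move=> ->; rewrite [#|~: _|]cardsCs setCK card_ord cards3 //.
Qed.

Lemma fam3 (i j k : 'I_n) (a b c : X) : i != j -> j != k -> i != k ->
  #|[set f : {ffun 'I_n -> X} | [forall x, #|f x| == K] && (f i == a) && (f j == b) && (f k == c)]|
  = SK a * SK b * SK c * 'C(P, K) ^ (n - 3).
Proof.
move=> ij jk ik.
pose F := fun x : 'I_n => [pred s : X | SK s && ((x == i) ==> (s == a)) && ((x == j) ==> (s == b))
                                          && ((x == k) ==> (s == c))].
have -> : [set f : {ffun 'I_n -> X} | [forall x, #|f x| == K] && (f i == a) && (f j == b) && (f k == c)]
        = [set f : {ffun 'I_n -> X} | [forall x, f x \in F x]].
  apply/setP=> f; rewrite !inE; apply/idP/idP.
    move=> /andP[/andP[/andP[/forallP h ha] hb] hc]; apply/forallP => x; rewrite inE /= /SK h /=.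
    apply/andP; split; first (apply/andP; split).
    - by apply/implyP => /eqP ->.
    - by apply/implyP => /eqP ->.
    - by apply/implyP => /eqP ->.
  move=> /forallP h; apply/andP; split; first (apply/andP; split; first (apply/andP; split)).
  - by apply/forallP => x; move: (h x); rewrite inE /= => /andP[/andP[/andP[]]].
  - by move: (h i); rewrite inE /= eqxx => /andP[/andP[/andP[_]]].
  - by move: (h j); rewrite inE /= eqxx => /andP[/andP[_]].
  - by move: (h k); rewrite inE /= eqxx => /andP[_].
have hF : forall x, #|F x| = if x == i then (SK a : nat) else if x == j then (SK b : nat)
                            else if x == k then (SK c : nat) else 'C(P, K).
  move=> x; case: (eqVneq x i) => [->|xi].
    rewrite -card_pred1_SK; apply: eq_card => s; rewrite !inE /= eqxx (negbTE ij) (negbTE ik) /=.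
    by rewrite !andbT andbC.
  case: (eqVneq x j) => [->|xj].
    rewrite -card_pred1_SK; apply: eq_card => s; rewrite !inE /= eqxx eq_sym (negbTE ij) (negbTE jk) /=.
    by rewrite !andbT andbC.
  case: (eqVneq x k) => [->|xk].
    have ki : k != i by rewrite eq_sym.
    have kj : k != j by rewrite eq_sym.
    rewrite -card_pred1_SK; apply: eq_card => s; rewrite !inE /= eqxx (negbTE ki) (negbTE kj) /=.
    by rewrite !andbT andbC.
  rewrite -card_SK; apply: eq_card => s.
  by rewrite !inE /= (negbTE xi) (negbTE xj) (negbTE xk) /= !andbT.
rewrite card_fam (eq_bigr _ (fun x _ => hF x)).
rewrite (bigD1 i) //= eqxx (bigD1 j) /=; last by rewrite eq_sym.
rewrite eqxx (negbTE (_ : j != i)); last by rewrite eq_sym.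
rewrite (bigD1 k) /=; last by rewrite eq_sym ik eq_sym jk.
rewrite eqxx (negbTE (_ : k != i)); last by rewrite eq_sym.
rewrite (negbTE (_ : k != j)); last by rewrite eq_sym.
rewrite (eq_bigr (fun _ => 'C(P, K))); last first.
  by move=> x /andP[/andP[xi xj] xk]; rewrite (negbTE xi) (negbTE xj) (negbTE xk).
rewrite prod_nat_const.
rewrite (_ : #|_| = n - 3); first by rewrite !mulnA.
rewrite -(card_rest ij jk ik); apply: eq_card => x; rewrite !inE /=.
by [].
Qed.

End Fam.

Lemma sum_eq1 (T : finType) (u : T) (F : T -> nat) : \sum_(a : T) ((u == a) * F a) = F u.
Proof.
rewrite (bigD1 u) //= eqxx mul1n big1 ?addn0 // => a ua.
by rewrite eq_sym (negbTE ua).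
Qed.

Lemma sum_eq3 (T : finType) (u v w : T) (F : T -> T -> T -> nat) :
  \sum_(a : T) \sum_(b : T) \sum_(c : T) ((u == a) * ((v == b) * ((w == c) * F a b c))) = F u v w.
Proof.
under eq_bigr => a _ do under eq_bigr => b _ do rewrite -big_distrr -big_distrr /= sum_eq1.
under eq_bigr => a _ do rewrite -big_distrr /= sum_eq1.
by rewrite sum_eq1.
Qed.

Section Key.
Variables (n P K : nat).
Local Notation X := {set 'I_P}.
Local Notation SK := (@SK P K).

Lemma sum_h (i j k : 'I_n) (h : X -> X -> X -> nat) : i != j -> j != k -> i != k ->
  \sum_(f in keyrings n K P) h (f i) (f j) (f k)
  = 'C(P, K) ^ (n - 3) * \sum_(a | SK a) \sum_(b | SK b) \sum_(c | SK c) h a b c.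
Proof.
move=> ij jk ik.
transitivity (\sum_(f in keyrings n K P) \sum_a \sum_b \sum_c
   ((f i == a) * ((f j == b) * ((f k == c) * h a b c)))).
  by apply: eq_bigr => f _; rewrite sum_eq3.
have sw : \sum_(f in keyrings n K P) \sum_a \sum_b \sum_c
   ((f i == a) * ((f j == b) * ((f k == c) * h a b c)))
  = \sum_a \sum_b \sum_c \sum_(f in keyrings n K P) ((f i == a) * ((f j == b) * ((f k == c) * h a b c))).
  rewrite exchange_big /=; apply: eq_bigr => a _.
  rewrite exchange_big /=; apply: eq_bigr => b _.
  by rewrite exchange_big.
rewrite sw.
have per : forall a b c, \sum_(f in keyrings n K P) ((f i == a) * ((f j == b) * ((f k == c) * h a b c)))
   = 'C(P, K) ^ (n - 3) * ((SK a : nat) * ((SK b : nat) * ((SK c : nat) * h a b c))).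
  move=> a b c.
  transitivity (h a b c * #|[set f : {ffun 'I_n -> X} | [forall x, #|f x| == K] && (f i == a) && (f j == b) && (f k == c)]|).
    rewrite -sumb big_distrr /= big_mkcond /=; apply: eq_bigr => f _.
    rewrite /keyrings !inE.
    case: [forall x, #|f x| == K]; case: (f i == a); case: (f j == b); case: (f k == c);
      by rewrite /= ?muln0 ?muln1 ?mul0n ?mul1n.
  rewrite fam3 //.
  case: (SK a); case: (SK b); case: (SK c); rewrite /= ?muln0 ?mul0n ?mul1n ?muln1 //; exact: mulnC.
under eq_bigr do under eq_bigr do under eq_bigr do rewrite per.
under eq_bigr do under eq_bigr do rewrite -big_distrr /=.
under eq_bigr do rewrite -big_distrr /=.
rewrite -big_distrr /=; congr (_ * _).
rewrite [RHS]big_mkcond; apply: eq_bigr => a _; case: (SK a) => /=.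
  under eq_bigr do under eq_bigr do rewrite mul1n.
  rewrite [RHS]big_mkcond; apply: eq_bigr => b _; case: (SK b) => /=.
    under eq_bigr do rewrite mul1n.
    rewrite [RHS]big_mkcond; apply: eq_bigr => c _; case: (SK c) => /=; by rewrite ?mul1n ?mul0n.
  by rewrite big1 // => c _; rewrite mul0n.
by rewrite big1 // => b _; rewrite big1 // => c _; rewrite mul0n.
Qed.


End Key.

Lemma card3_ex n (T : {set 'I_n}) : #|T| == 3 ->
  exists i j k, [/\ i != j, j != k, i != k & T = [set i; j; k]].
Proof.
move=> /eqP h3.
have : 0 < #|T| by rewrite h3.
case/card_gt0P => i iT.
have : #|T :\ i| == 2 by move: h3; rewrite (cardsD1 i T) iT add1n => -[->].
case/cards2P => j [k [njk e]].
have ni : i \notin T :\ i by rewrite !inE eqxx.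
rewrite e !inE negb_or in ni; case/andP: ni => nij nik.
exists i, j, k; split => //.
apply/setP=> x; rewrite -(setD1K iT) e !inE.
by rewrite orbA.
Qed.

Lemma cond_pm n P (f : {ffun 'I_n -> {set 'I_P}}) (i j k : 'I_n) : i != j -> j != k -> i != k ->
  [forall x in [set i; j; k], forall y in [set i; j; k], (x != y) ==> (f x :&: f y != set0)]
  = pm (f i) (f j) (f k).
Proof.
move=> ij jk ik; apply/idP/idP.
  move=> /forallP H.
  have H2 x y : x \in [set i; j; k] -> y \in [set i; j; k] -> x != y -> f x :&: f y != set0.
    move=> xT yT nxy; move: (H x); rewrite xT /= => /forallP /(_ y); rewrite yT nxy.
    by [].
  have iT : i \in [set i; j; k] by rewrite !inE eqxx.
  have jT : j \in [set i; j; k] by rewrite !inE eqxx orbT.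
  have kT : k \in [set i; j; k] by rewrite !inE eqxx orbT.
  apply/and3P; split; apply: H2 => //; by rewrite eq_sym.
move=> /and3P[h1 h2 h3]; apply/forallP=> x; apply/implyP => xT; apply/forallP => y.
apply/implyP => yT; apply/implyP => nxy.
move: xT yT; rewrite !inE => /orP[/orP[]|] /eqP ex /orP[/orP[]|] /eqP ey; subst x y;
  rewrite ?eqxx // in nxy; by rewrite // setIC.
Qed.

Lemma tri_sum n K P : sum_triangles n K P = 'C(n, 3) * ('C(P, K) ^ (n - 3) * ttri P K).
Proof.
rewrite /sum_triangles.
transitivity (\sum_(f in keyrings n K P) \sum_(T : {set 'I_n})
   (((#|T| == 3) && [forall i in T, forall j in T, (i != j) ==> (f i :&: f j != set0)]) : nat)).
  by apply: eq_bigr => f _; rewrite /triangles -sumb.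
rewrite exchange_big /=.
transitivity (\sum_(T : {set 'I_n}) ((#|T| == 3) : nat) * ('C(P, K) ^ (n - 3) * ttri P K)).
  apply: eq_bigr => T _; case: (boolP (#|T| == 3)) => h3; last by rewrite big1 // => f _; rewrite (negbTE h3).
  have [i [j [k [ij jk ik eT]]]] := card3_ex h3.
  rewrite mul1n -(@sum_h n P K i j k (fun a b c => (pm a b c : nat))) //.
  apply: eq_bigr => f _; subst T; by rewrite /= cond_pm.
by rewrite -big_distrl /= sumb card_draws card_ord.
Qed.

Lemma card_keyrings n K P : #|keyrings n K P| = 'C(P, K) ^ n.
Proof.
rewrite /keyrings (_ : [set f : {ffun 'I_n -> {set 'I_P}} | [forall i, #|f i| == K]] =
   [set f : {ffun 'I_n -> {set 'I_P}} | [forall x, f x \in [pred s : {set 'I_P} | #|s| == K]]]).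
  rewrite card_fam (eq_bigr (fun _ => 'C(P, K))) ?prod_nat_const ?card_ord //.
  move=> x _; have := card_draws 'I_P K; rewrite card_ord => <-; apply: eq_card => s; by rewrite !inE.
by apply/setP=> f; rewrite !inE.
Qed.

Local Open Scope R_scope.

Lemma pow_le_mono (a b : R) (n : nat) : 0 <= a -> a <= b -> a ^ n <= b ^ n.
Proof. intros; apply pow_incr; lra. Qed.

Lemma norm_core (pp r y2 y3 x : R) :
  20 <= pp -> 0 < r -> 1 <= pp * r -> 20 * pp * r^2 <= 1 ->
  r * (pp * r - 1) / pp <= y2 -> y2 <= r^2 -> 0 <= y3 -> y3 <= r^3 ->
  x <= pp * r^3 + pp * ((pp-1)*(pp-2)) * y2^3 ->
  pp * r^3 + pp * ((pp-1)*(pp-2)) * y2^3 <= x + pp*(pp*y2^3) +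
    pp*(pp*(pp*(pp*(y3*y3*y2)+pp*(y2*y3*y3)+pp*(y3*y2*y3) + y3*y2*y2 + y2*y3*y2 + y2*y2*y3))) ->
  (pp * r^3 + pp^3 * r^6) * (1 - 10 * (pp * r^2)) <= x <= pp * r^3 + pp^3 * r^6.
Proof.
intros hpp hr hk hl hy2l hy2u hy3l hy3u hu hlo.
set (k := pp * r).
assert (hppos : 0 < pp) by lra.
assert (hy2p : 0 <= y2).
{ apply Rle_trans with (2 := hy2l). apply Rmult_le_pos; [|left; apply Rinv_0_lt_compat; lra].
  apply Rmult_le_pos; lra. }
assert (hPd0 : 0 <= pp * ((pp-1)*(pp-2))).
{ apply Rmult_le_pos; [lra|]; apply Rmult_le_pos; lra. }
assert (hPd1 : pp * ((pp-1)*(pp-2)) <= pp^3) by nra.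
assert (hy23 : y2^3 <= (r^2)^3) by (apply pow_le_mono; lra).
assert (hy23p : 0 <= y2^3) by (apply pow_le; lra).
assert (er6 : (r^2)^3 = r^6) by ring.
split.
2:{ apply Rle_trans with (1 := hu). apply Rplus_le_compat_l.
    apply Rle_trans with (pp^3 * y2^3).
    - apply Rmult_le_compat_r; lra.
    - rewrite <- er6. apply Rmult_le_compat_l; [apply pow_le; lra | lra]. }
set (a := pp * r^3). set (b := pp^3 * r^6). set (lam := pp * r^2).
assert (hlam : 0 < lam) by (unfold lam; apply Rmult_lt_0_compat; [lra| apply pow_lt; lra]).
assert (hap : 0 < a) by (unfold a; apply Rmult_lt_0_compat; [lra| apply pow_lt; lra]).
assert (hbp : 0 < b) by (unfold b; apply Rmult_lt_0_compat; apply pow_lt; lra).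
assert (hrl : r <= lam) by (unfold lam; nra).
assert (hil : 1 <= pp * lam) by (unfold lam; nra).
assert (P1 : pp*(pp*y2^3) <= b * lam).
{ apply Rle_trans with (pp*(pp*r^6)).
  - rewrite <- er6. apply Rmult_le_compat_l; [lra|]. apply Rmult_le_compat_l; lra.
  - unfold b, lam. assert (hk2 : 1 <= pp*(pp*r^2)) by nra.
    assert (hq : 0 <= pp*(pp*r^6)).
    { apply Rmult_le_pos; [lra|]. apply Rmult_le_pos; [lra|]. apply pow_le; lra. }
    replace (pp^3*r^6*(pp*r^2)) with (pp*(pp*r^6) * (pp*(pp*r^2))) by ring.
    nra. }
assert (hy3y2 : y3*y3*y2 <= r^3*r^3*r^2).
{ apply Rmult_le_compat; [nra|lra| |lra]. apply Rmult_le_compat; lra. }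
assert (hy32 : y3*y2*y2 <= r^3*r^2*r^2).
{ apply Rmult_le_compat; [nra|lra| |lra]. apply Rmult_le_compat; lra. }
assert (P2 : pp*(pp*(pp*(pp*(y3*y3*y2)+pp*(y2*y3*y3)+pp*(y3*y2*y3) + y3*y2*y2 + y2*y3*y2 + y2*y2*y3)))
   <= 3 * (b * lam) + 3 * (b * r)).
{ assert (E : pp*(pp*(pp*(pp*(y3*y3*y2)+pp*(y2*y3*y3)+pp*(y3*y2*y3) + y3*y2*y2 + y2*y3*y2 + y2*y2*y3)))
            = pp^3 * (3 * pp * (y3*y3*y2) + 3 * (y3*y2*y2))) by ring.
  rewrite E.
  assert (E2 : 3 * (b * lam) + 3 * (b * r) = pp^3 * (3 * pp * (r^3*r^3*r^2) + 3 * (r^3*r^2*r^2)))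
    by (unfold b, lam; ring).
  rewrite E2. apply Rmult_le_compat_l; [apply pow_le; lra|].
  apply Rplus_le_compat; apply Rmult_le_compat_l; nra. }
assert (hk1 : 0 <= k - 1) by (unfold k; lra).
assert (hy2l' : r * (k - 1) / pp <= y2) by (unfold k; exact hy2l).
assert (hc : (r * (k - 1) / pp)^3 <= y2^3).
{ apply pow_le_mono; [|exact hy2l']. unfold Rdiv. apply Rmult_le_pos; [nra|left; apply Rinv_0_lt_compat; lra]. }
assert (hPd2 : pp^3 - 3*pp^2 <= pp * ((pp-1)*(pp-2))) by nra.
assert (hPd3 : 0 <= pp^3 - 3*pp^2) by nra.
assert (hk3 : k^3 - 3*k^2 <= (k-1)^3) by nra.
assert (hk3p : 0 <= (k-1)^3) by (apply pow_le; lra).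
assert (P4 : (pp^3 - 3*pp^2) * (k^3 - 3*k^2) * r^3 / pp^3 <= pp * ((pp-1)*(pp-2)) * y2^3).
{ apply Rle_trans with (pp * ((pp-1)*(pp-2)) * (r * (k - 1) / pp)^3).
  2:{ apply Rmult_le_compat_l; lra. }
  assert (E : pp * ((pp-1)*(pp-2)) * (r * (k - 1) / pp)^3 = pp * ((pp-1)*(pp-2)) * (k-1)^3 * r^3 / pp^3)
    by (field; lra).
  rewrite E. unfold Rdiv. apply Rmult_le_compat_r; [left; apply Rinv_0_lt_compat, pow_lt; lra|].
  apply Rmult_le_compat_r; [apply pow_le; lra|].
  apply Rle_trans with ((pp^3 - 3*pp^2) * (k-1)^3).
  - apply Rmult_le_compat_l; lra.
  - apply Rmult_le_compat_r; lra. }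
assert (E4 : (pp^3 - 3*pp^2) * (k^3 - 3*k^2) * r^3 / pp^3 = b - 3 * (a * lam) - 3 * (b / pp) + 9 * (a * lam) / pp)
  by (unfold a, b, lam, k; field; lra).
rewrite E4 in P4.
assert (hbl : b / pp <= b * lam).
{ unfold Rdiv. apply Rle_trans with (b * / pp * (pp * lam)).
  - rewrite <- (Rmult_1_r (b * / pp)) at 1. apply Rmult_le_compat_l; [|lra].
    apply Rmult_le_pos; [lra| left; apply Rinv_0_lt_compat; lra].
  - right; field; lra. }
assert (h9 : 0 <= 9 * (a * lam) / pp).
{ unfold Rdiv. apply Rmult_le_pos; [nra| left; apply Rinv_0_lt_compat; lra]. }
assert (hbr : b * r <= b * lam) by (apply Rmult_le_compat_l; lra).
fold a b lam in hlo.
nra.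
Qed.

Lemma INR_muln (m n : nat) : INR (m * n) = INR m * INR n.
Proof. exact: mult_INR. Qed.
Lemma INR_addn (m n : nat) : INR (m + n) = INR m + INR n.
Proof. exact: plus_INR. Qed.
Lemma INR_expn (m n : nat) : INR (m ^ n) = INR m ^ n.
Proof. elim: n => [|n IH] //=; by rewrite expnS INR_muln IH. Qed.
Lemma INR_subn (m n : nat) : (n <= m)%N -> INR (m - n) = INR m - INR n.
Proof. move=> h; apply: minus_INR; exact/leP. Qed.
Lemma INR_leq (m n : nat) : (m <= n)%N -> INR m <= INR n.
Proof. move=> h; apply: le_INR; exact/leP. Qed.
Lemma INR_leq' (m n : nat) : INR m <= INR n -> (m <= n)%N.
Proof. move=> h; apply/leP; exact: INR_le. Qed.

Lemma x3 K P : (K <= P)%N -> (K*(K-1)*(K-2)*(P*P*P) <= P*(P-1)*(P-2)*(K*K*K))%N.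
Proof. move=> h.
have a1 : ((K-1)*P <= (P-1)*K)%N by nia.
have a2 : ((K-2)*P <= (P-2)*K)%N by nia.
have : (K * ((K-1)*P) * ((K-2)*P) * P <= K * ((P-1)*K) * ((P-2)*K) * P)%N.
  by apply: leq_mul => //; apply: leq_mul => //; apply: leq_mul.
nia.
Qed.

Section Bridge.
Variables P K : nat.
Hypothesis hK1 : (1 <= K)%N.
Hypothesis hsmall : 20 * INR K ^ 2 <= INR P.

Let k := INR K.
Let pp := INR P.

Lemma k_ge1 : 1 <= k.
Proof. rewrite /k; have := INR_leq hK1; rewrite /=; lra. Qed.

Lemma pp_ge20 : 20 <= pp.
Proof. have := k_ge1; rewrite /pp; move: hsmall; rewrite -/k; nra. Qed.

Lemma KleP : (K <= P)%N.
Proof. apply: INR_leq'; have := k_ge1; move: hsmall; rewrite -/k -/pp /k /pp; nra. Qed.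

Lemma twoK : (2 * K <= P)%N.
Proof. apply: INR_leq'; rewrite INR_muln; have := k_ge1; move: hsmall; rewrite -/k -/pp /k /pp /=; nra. Qed.


Lemma ff1 n : (n ^_ 1 = n)%N. Proof. by rewrite !ffactnSr ffactn0 subn0 mul1n. Qed.
Lemma ff2 n : (n ^_ 2 = n * (n - 1))%N. Proof. by rewrite !ffactnSr ffactn0 subn0 mul1n. Qed.
Lemma ff3 n : (n ^_ 3 = n * (n - 1) * (n - 2))%N. Proof. by rewrite !ffactnSr ffactn0 subn0 mul1n. Qed.

Let nn := INR 'C(P, K).
Let X1 := INR (gs P K 1).
Let X2 := INR (gs P K 2).
Let X3 := INR (gs P K 3).
Let T := INR (ttri P K).

Lemma nn_pos : 0 < nn.
Proof. apply: lt_0_INR; apply/ltP; rewrite bin_gt0; exact: KleP. Qed.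

Lemma P2 : (2 <= P)%N.
Proof. apply: INR_leq'; have := pp_ge20; rewrite /pp /=; lra. Qed.
Lemma P1 : (1 <= P)%N.
Proof. by apply: leq_trans P2. Qed.
Lemma P3 : (3 <= P)%N.
Proof. apply: INR_leq'; have := pp_ge20; rewrite /pp /=; lra. Qed.

Lemma r1 : X1 * pp = nn * k.
Proof.
have := gs_ratio 1 KleP; rewrite !ff1 => /(congr1 INR); rewrite !INR_muln. by [].
Qed.

Lemma r2 : X2 * (pp * (pp - 1)) = nn * (k * (k - 1)).
Proof.
have p1 := P1.
have := gs_ratio 2 KleP; rewrite !ff2 => /(congr1 INR); rewrite !INR_muln !INR_subn //.
Qed.

Lemma r3 : X3 * pp ^ 3 <= nn * k ^ 3.
Proof.
have e := gs_ratio 3 KleP; rewrite !ff3 in e.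
have h : (gs P K 3 * (P * P * P) <= 'C(P, K) * (K * K * K))%N.
  have hx := x3 KleP.
  have hp : (0 < P * (P - 1) * (P - 2))%N by have := P3; nia.
  rewrite -(leq_pmul2r hp).
  have -> : (gs P K 3 * (P * P * P) * (P * (P - 1) * (P - 2)) = gs P K 3 * (P * (P - 1) * (P - 2)) * (P * P * P))%N by nia.
  rewrite e; nia.
have := INR_leq h; rewrite !INR_muln /X3 /nn /pp /k /=.
lra.
Qed.

Lemma x_bounds :
  (k^3/pp^2 + k^6/pp^3) * (1 - 10 * (k^2/pp)) <= T / nn^3 <= k^3/pp^2 + k^6/pp^3.
Proof.
have p1 := P1; have p2 := P2.
have hu := INR_leq (t_up P K).
rewrite !INR_addn !INR_muln ?INR_expn !INR_subn // -/X1 -/X2 -/T -/pp /= in hu.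
have hl := INR_leq (t_low P K).
rewrite !INR_addn !INR_muln ?INR_expn !INR_subn // -/X1 -/X2 -/X3 -/T -/pp /= in hl.
have hnn := nn_pos. have hk := k_ge1. have hp := pp_ge20.
have hs : 20 * k^2 <= pp by exact: hsmall.
set r := k / pp. set y2 := X2 / nn. set y3 := X3 / nn. set x := T / nn^3.
have eX1 : X1 = r * nn by have := r1; rewrite /r => h; apply: (Rmult_eq_reg_r pp); [rewrite h; field|]; lra.
have eX2 : X2 = y2 * nn by rewrite /y2; field; lra.
have eX3 : X3 = y3 * nn by rewrite /y3; field; lra.
have eT : T = x * nn^3 by rewrite /x; field; lra.
have hn3 : 0 < nn^3 by apply: pow_lt.
have hy2 : y2 = k * (k - 1) / (pp * (pp - 1)).
  have e' : X2 = nn * (k * (k - 1)) / (pp * (pp - 1)) by rewrite -r2; field; nra.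
  rewrite /y2 e'; field; nra.
have hy3 : y3 * pp^3 <= k^3.
  have := r3; rewrite eX3 => h; apply: (Rmult_le_reg_r nn) => //; nra.
have hy3p : 0 <= y3 by rewrite /y3; apply: Rmult_le_pos; [exact: pos_INR| left; apply: Rinv_0_lt_compat].
have hpp : 0 < pp by lra.
have hk' : k = pp * r by rewrite /r; field; lra.
have core := @norm_core pp r y2 y3 x hp.
have [lo up] : (pp * r^3 + pp^3 * r^6) * (1 - 10 * (pp * r^2)) <= x <= pp * r^3 + pp^3 * r^6.
  apply: core.
  - rewrite /r; apply: Rdiv_lt_0_compat; lra.
  - lra.
  - rewrite hk' in hs; nra.
  - rewrite hy2 /r; apply: (Rmult_le_reg_r (pp * pp * (pp - 1))); first nra.
    have e1 : k / pp * (pp * (k / pp) - 1) / pp * (pp * pp * (pp - 1)) = k * (k - 1) * (pp - 1) by field; lra.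
    have e2 : k * (k - 1) / (pp * (pp - 1)) * (pp * pp * (pp - 1)) = k * (k - 1) * pp by field; nra.
    rewrite e1 e2; nra.
  - rewrite hy2 /r; apply: (Rmult_le_reg_r (pp * pp * (pp * (pp - 1)))); first nra.
    have e1 : k * (k - 1) / (pp * (pp - 1)) * (pp * pp * (pp * (pp - 1))) = k * (k - 1) * (pp * pp) by field; nra.
    have e2 : (k / pp)^2 * (pp * pp * (pp * (pp - 1))) = k^2 * (pp * (pp - 1)) by field; lra.
    rewrite e1 e2; nra.
  - exact: hy3p.
  - rewrite /r; apply: (Rmult_le_reg_r (pp^3)); first exact: pow_lt.
    have e : (k / pp)^3 * pp^3 = k^3 by field; lra.
    by rewrite e.
  - apply: (Rmult_le_reg_r (nn^3)) => //.
    rewrite -eT; apply: (Rle_trans _ _ _ hu); right; rewrite eX1 eX2; ring.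
  - apply: (Rmult_le_reg_r (nn^3)) => //.
    eapply Rle_trans; [eapply Rle_trans; [|exact: hl]|].
    + right; rewrite eX1 eX2; ring.
    + rewrite !INR_addn !INR_muln -/X2 -/X3 -/pp.
      right; rewrite eX2 eX3 eT; ring.
have ea : pp * r^3 = k^3/pp^2 by rewrite /r; field; lra.
have eb : pp^3 * r^6 = k^6/pp^3 by rewrite /r; field; lra.
have el : pp * r^2 = k^2/pp by rewrite /r; field; lra.
by rewrite -ea -eb -el; split.
Qed.

Lemma q_bounds : k^2/pp - (k^2/pp)^2 <= 1 - q K P <= k^2/pp.
Proof.
have hnn := nn_pos. have hk := k_ge1. have hp := pp_ge20. have hs : 20 * k^2 <= pp by exact: hsmall.
have [A0 hA0] : exists A0 : {set 'I_P}, #|A0| = K.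
  have : (0 < #|[set A : {set 'I_P} | #|A| == K]|)%N by rewrite card_draws card_ord bin_gt0 KleP.
  by case/card_gt0P => A0; rewrite inE => /eqP h; exists A0.
have hq := q_parts KleP hA0.
set Sq := (\sum_(B | SK K B) ((B :&: A0 != set0) : nat))%N in hq.
have e : 1 - q K P = INR Sq / nn.
  rewrite /q twoK -/nn; apply: (Rmult_eq_reg_r nn); last lra.
  have := congr1 INR hq; rewrite INR_addn -/nn => h.
  have h' : INR Sq = nn - INR 'C(P - K, K) by lra.
  rewrite h'; field; lra.
have hu := INR_leq (q_up hA0); rewrite -/Sq INR_muln -/X1 -/k in hu.
have hl := INR_leq (q_low hA0); rewrite -/Sq !INR_addn !INR_muln -/X1 -/X2 -/k in hl.
have eX1 : X1 = nn * k / pp by rewrite -r1; field; lra.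
have eX2 : X2 = nn * (k * (k - 1)) / (pp * (pp - 1)) by rewrite -r2; field; nra.
have hX2 : X2 <= nn * (k/pp)^2.
  rewrite eX2; apply: (Rmult_le_reg_r (pp * pp * (pp - 1))); first nra.
  have e1 : nn * (k * (k - 1)) / (pp * (pp - 1)) * (pp * pp * (pp - 1)) = nn * (k * (k - 1)) * pp by field; nra.
  have e2 : nn * (k / pp)^2 * (pp * pp * (pp - 1)) = nn * k^2 * (pp - 1) by field; lra.
  rewrite e1 e2.
  have : k * (k - 1) * pp <= k^2 * (pp - 1) by nra.
  nra.
rewrite e; split.
- apply: (Rmult_le_reg_r nn) => //.
  have -> : INR Sq / nn * nn = INR Sq by field; lra.
  have e3 : (k ^ 2 / pp - (k ^ 2 / pp) ^ 2) * nn = k * (nn * k / pp) - k * k * (nn * (k/pp)^2) by field; lra.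
  rewrite e3 -eX1.
  have : k * k * X2 <= k * k * (nn * (k/pp)^2) by apply: Rmult_le_compat_l; nra.
  lra.
- apply: (Rmult_le_reg_r nn) => //.
  have -> : INR Sq / nn * nn = INR Sq by field; lra.
  have -> : k ^ 2 / pp * nn = k * X1 by rewrite eX1; field; lra.
  exact: hu.
Qed.

End Bridge.

Lemma squeeze (u e : nat -> R) (l0 c : R) : 0 < c -> Un_cv e l0 ->
  (exists N, forall n, (N <= n)%coq_nat -> Rabs (u n - 1) <= c * Rabs (e n - l0)) -> Un_cv u 1.
Proof.
move=> hc he [N hN] eps heps.
have [N1 h1] := he (eps / c) (Rdiv_lt_0_compat _ _ heps hc).
exists (Nat.max N N1) => n hn.
rewrite /R_dist.
have h2 := h1 n (Nat.le_trans _ _ _ (Nat.le_max_r N N1) hn); rewrite /R_dist in h2.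
have h3 := hN n (Nat.le_trans _ _ _ (Nat.le_max_l N N1) hn).
apply: Rle_lt_trans h3 _.
have : c * Rabs (e n - l0) < c * (eps / c) by apply: Rmult_lt_compat_l.
have -> : c * (eps / c) = eps by field; lra.
by [].
Qed.

Lemma cv_ext_ev (u v : nat -> R) l : Un_cv u l ->
  (exists N, forall n, (N <= n)%coq_nat -> v n = u n) -> Un_cv v l.
Proof.
move=> hu [N hN] eps heps; have [N1 h1] := hu eps heps.
exists (Nat.max N N1) => n hn.
rewrite hN; last exact: (Nat.le_trans _ _ _ (Nat.le_max_l N N1) hn).
exact: h1 (Nat.le_trans _ _ _ (Nat.le_max_r N N1) hn).
Qed.

Lemma ET_eq n K P : (3 <= n)%N -> (K <= P)%N ->
  ET_key n K P = INR 'C(n, 3) * (INR (ttri P K) / INR 'C(P, K) ^ 3).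
Proof.
move=> hn hKP.
rewrite /ET_key tri_sum card_keyrings !INR_muln !INR_expn.
have hN : 0 < INR 'C(P, K) by apply: lt_0_INR; apply/ltP; rewrite bin_gt0.
have -> : n = (n - 3 + 3)%N by rewrite subnK.
rewrite pow_add.
have -> : (n - 3 + 3 - 3)%N = (n - 3)%N by rewrite addnK.
field; split; [lra | apply: pow_nonzero; lra].
Qed.

Section Local.
Variables (n K P : nat) (pn : R).
Hypothesis hK1 : (1 <= K)%N.
Hypothesis hKP : (K <= P)%N.
Hypothesis hl : R_dist (INR K ^ 2 / INR P) 0 < 1 / 20.
Hypothesis hv : R_dist (pn / (1 - q K P)) 1 < 1 / 2.
Hypothesis hn : (3 <= n)%N.

Let k := INR K.
Let pp := INR P.
Let lam := k ^ 2 / pp.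
Let x := INR (ttri P K) / INR 'C(P, K) ^ 3.
Let Q := 1 - q K P.

Lemma loc_k : 1 <= k.
Proof. rewrite /k; have := INR_leq hK1; rewrite /=; lra. Qed.
Lemma loc_pp : k <= pp.
Proof. exact: INR_leq. Qed.
Lemma loc_small : 20 * INR K ^ 2 <= INR P.
Proof.
have hk := loc_k; have hp := loc_pp.
move: hl; rewrite /R_dist Rminus_0_r Rabs_right; last first.
  apply: Rle_ge; apply: Rmult_le_pos; [nra| left; apply: Rinv_0_lt_compat; rewrite -/pp; lra].
rewrite -/k -/pp => h.
have hpp : 0 < pp by lra.
have : k ^ 2 / pp * pp < 1 / 20 * pp by apply: Rmult_lt_compat_r.
have -> : k ^ 2 / pp * pp = k ^ 2 by field; lra.
lra.
Qed.

Lemma loc_lam : 0 < lam <= 1 / 20.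
Proof.
have hs := loc_small; have hk := loc_k; rewrite -/k -/pp in hs.
have hpp : 0 < pp by nra.
rewrite /lam; split; first by apply: Rdiv_lt_0_compat; nra.
apply: (Rmult_le_reg_r pp) => //; have -> : k ^ 2 / pp * pp = k ^ 2 by field; lra.
lra.
Qed.

Lemma loc_x : (k^3/pp^2 + k^6/pp^3) * (1 - 10 * lam) <= x <= k^3/pp^2 + k^6/pp^3.
Proof. exact: (x_bounds hK1 loc_small). Qed.

Lemma loc_Q : lam - lam ^ 2 <= Q <= lam.
Proof. exact: (q_bounds hK1 loc_small). Qed.

Let ab := k^3/pp^2 + k^6/pp^3.

Lemma loc_pos : 0 < pp /\ 0 < ab /\ 0 < Q.
Proof.
have hk := loc_k; have hs := loc_small; rewrite -/k -/pp in hs.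
have hpp : 0 < pp by nra.
have [hl0 hl1] := loc_lam. have [hq0 hq1] := loc_Q.
split => //; split; last by nra.
rewrite /ab; apply: Rplus_lt_0_compat; apply: Rdiv_lt_0_compat; apply: pow_lt; lra.
Qed.

Lemma loc_A : Rabs (x / ab - 1) <= 10 * Rabs (lam - 0).
Proof.
have [hpp [hab hQ]] := loc_pos. have [hl0 hl1] := loc_lam. have [hx0 hx1] := loc_x.
rewrite Rminus_0_r (Rabs_right lam); last lra.
apply: Rabs_le; split.
- have : (1 - 10 * lam) <= x / ab.
    apply: (Rmult_le_reg_r ab) => //; have -> : x / ab * ab = x by field; lra.
    by rewrite Rmult_comm.
  lra.
- have : x / ab <= 1.
    apply: (Rmult_le_reg_r ab) => //; have -> : x / ab * ab = x by field; lra.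
    rewrite Rmult_1_l; exact: hx1.
  lra.
Qed.

Lemma loc_B : Rabs (lam / Q - 1) <= 2 * Rabs (lam - 0).
Proof.
have [hpp [hab hQ]] := loc_pos. have [hl0 hl1] := loc_lam. have [hq0 hq1] := loc_Q.
rewrite Rminus_0_r (Rabs_right lam); last lra.
apply: Rabs_le; split.
- have : 1 <= lam / Q.
    apply: (Rmult_le_reg_r Q) => //; have -> : lam / Q * Q = lam by field; lra.
    lra.
  nra.
- have : lam / Q <= 1 + 2 * lam.
    apply: (Rmult_le_reg_r Q) => //; have -> : lam / Q * Q = lam by field; lra.
    nra.
  lra.
Qed.

Lemma loc_C : Rabs (Q / pn - 1) <= 2 * Rabs (pn / Q - 1).
Proof.
have [hpp [hab hQ]] := loc_pos.
move: hv; rewrite /R_dist -/Q => hv'.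
have hv2 : 1 / 2 < pn / Q by move: hv' => /Rabs_def2 [h1 h2]; lra.
have hpn : 0 < pn.
  have : 0 < pn / Q * Q by apply: Rmult_lt_0_compat; lra.
  have -> : pn / Q * Q = pn by field; lra.
  by [].
have e : Q / pn = / (pn / Q) by field; lra.
rewrite e.
set w := pn / Q in hv2 *.
have ha1 : w - 1 <= Rabs (w - 1) by apply: Rle_abs.
have ha2 : - (w - 1) <= Rabs (w - 1) by rewrite -Rabs_Ropp; apply: Rle_abs.
have hw0 : 0 < w by lra.
have ei : / w - 1 = (1 - w) / w by field; lra.
rewrite ei; apply: Rabs_le; split.
- apply: (Rmult_le_reg_r w) => //; have -> : (1 - w) / w * w = 1 - w by field; lra.
  nra.
- apply: (Rmult_le_reg_r w) => //; have -> : (1 - w) / w * w = 1 - w by field; lra.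
  nra.
Qed.

Lemma loc_eq : ET_key n K P / ET_er n pn / (1 + pp / k ^ 3)
  = x / ab * ((lam / Q) * ((lam / Q) * (lam / Q)) * ((Q / pn) * ((Q / pn) * (Q / pn)))).
Proof.
have [hpp [hab hQ]] := loc_pos. have hk := loc_k.
move: hv; rewrite /R_dist -/Q => hv'.
have hv2 : 1 / 2 < pn / Q by move: hv' => /Rabs_def2 [h1 h2]; lra.
have hpn : 0 < pn.
  have : 0 < pn / Q * Q by apply: Rmult_lt_0_compat; lra.
  have -> : pn / Q * Q = pn by field; lra.
  by [].
have hC : 0 < INR 'C(n, 3) by apply: lt_0_INR; apply/ltP; rewrite bin_gt0.
rewrite ET_eq // /ET_er -/x -/pp -/k /ab /lam.
field. repeat split. all: try lra. all: try nra.
have : 0 < k ^ 3 * pp + k ^ 6 by apply: Rplus_lt_0_compat; [apply: Rmult_lt_0_compat; [apply: pow_lt|]|apply: pow_lt]; lra.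
lra.
Qed.


End Local.

Theorem corollary1 (P K : nat -> nat) (p : nat -> R)
  (hscal : forall n : nat, (1 <= K n)%N && (K n <= P n)%N)
  (hKP : Un_cv (fun n => INR (K n) ^ 2 / INR (P n)) 0)
  (hp01 : forall n : nat, 0 <= p n <= 1)
  (hp : Un_cv (fun n => p n / (1 - q (K n) (P n))) 1) :
  Un_cv (fun n => (ET_key n (K n) (P n) / ET_er n (p n))
                  / (1 + INR (P n) / INR (K n) ^ 3)) 1.
Proof.
have [N1 hN1] := hKP (1/20) ltac:(lra).
have [N2 hN2] := hp (1/2) ltac:(lra).
pose N0 := Nat.max (Nat.max N1 N2) 3.
have hfacts : forall n, (N0 <= n)%coq_nat ->
   [/\ (1 <= K n)%N, (K n <= P n)%N, R_dist (INR (K n) ^ 2 / INR (P n)) 0 < 1 / 20,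
       R_dist (p n / (1 - q (K n) (P n))) 1 < 1 / 2 & (3 <= n)%N].
  move=> n hn; have /andP[a b] := hscal n; split => //.
  - apply: hN1; apply: (Nat.le_trans _ _ _ _ hn); rewrite /N0; lia.
  - apply: hN2; apply: (Nat.le_trans _ _ _ _ hn); rewrite /N0; lia.
  - apply/leP; apply: (Nat.le_trans _ _ _ _ hn); rewrite /N0; lia.
pose A n := INR (ttri (P n) (K n)) / INR 'C(P n, K n) ^ 3 /
    (INR (K n) ^ 3 / INR (P n) ^ 2 + INR (K n) ^ 6 / INR (P n) ^ 3).
pose B n := INR (K n) ^ 2 / INR (P n) / (1 - q (K n) (P n)).
pose C n := (1 - q (K n) (P n)) / p n.
have hA : Un_cv A 1.
  apply: (@squeeze A _ 0 10 ltac:(lra) hKP); exists N0 => n hn.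
  have [a b c d e] := hfacts n hn; exact: loc_A.
have hB : Un_cv B 1.
  apply: (@squeeze B _ 0 2 ltac:(lra) hKP); exists N0 => n hn.
  have [a b c d e] := hfacts n hn; exact: loc_B.
have hC : Un_cv C 1.
  apply: (@squeeze C _ 1 2 ltac:(lra) hp); exists N0 => n hn.
  have [a b c d e] := hfacts n hn; exact: loc_C.
have hB3 := CV_mult _ _ _ _ hB (CV_mult _ _ _ _ hB hB).
have hC3 := CV_mult _ _ _ _ hC (CV_mult _ _ _ _ hC hC).
have hall := CV_mult _ _ _ _ hA (CV_mult _ _ _ _ hB3 hC3).
rewrite !Rmult_1_l in hall.
apply: (cv_ext_ev hall); exists N0 => n hn.
have [a b c d e] := hfacts n hn; exact: loc_eq.
Qed.
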